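(* Let $\mathbf{s}$ be any composition (finite tuple of positive integers) of weight $w$ and let $p$ be an odd prime. Then $$-S(\mathbf{s}^\ast;p-1)\equiv S(\mathbf{s};p-1)+p\sum_{\mathbf{t}\preceq\mathbf{s}}H(\mathbf{t}\sqcup(1);p-1)\pmod{p^2}.$$
   Context: For $\mathbf{s}=(s_1,\dots,s_l)$ and $N\ge0$: $H(\mathbf{s};N)=\sum_{1\le k_1<\dots<k_l\le N}k_1^{-s_1}\cdots k_l^{-s_l}$, $S(\mathbf{s};N)=\sum_{1\le k_1\le\dots\le k_l\le N}k_1^{-s_1}\cdots k_l^{-s_l}$. The weight of $\mathbf{s}$ is $s_1+\dots+s_l$. For $\mathbf{s}=(i_1,\dots,i_k)$ of weight $w$, let $P(\mathbf{s})=\{i_1,i_1+i_2,\dots,i_1+\dots+i_{k-1}\}\subseteq\{1,\dots,w-1\}$; $P$ is a bijection from compositions of $w$ to subsets of $\{1,\dots,w-1\}$, and $\mathbf{s}^\ast$ is the composition of $w$ with $P(\mathbf{s}^\ast)=\{1,\dots,w-1\}\setminus P(\mathbf{s})$. $\mathbf{t}\preceq\mathbf{s}$ means $\mathbf{t}$ is obtained from $\mathbf{s}$ by combining (adding) some groups of consecutive parts (including $\mathbf{t}=\mathbf{s}$). $\mathbf{t}\sqcup(1)$ is the tuple $\mathbf{t}$ with an entry $1$ appended at the end. Congruences of rationals with denominators prime to $p$ are in the usual $p$-integral sense. *)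

(* Defs.v *)
From mathcomp Require Import all_boot all_order all_algebra.
Set Implicit Arguments. Unset Strict Implicit. Unset Printing Implicit Defensive.
Import Order.TTheory GRing.Theory Num.Theory.
Local Open Scope ring_scope.

Definition composition (s : seq nat) : bool := all (fun i => (0 < i)%N) s.

Definition weight (s : seq nat) : nat := sumn s.

(* Hrec s m N = sum_{m < k_1 < ... < k_l <= N} k_1^{-s_1} ... k_l^{-s_l} *)
Fixpoint Hrec (s : seq nat) (m N : nat) : rat :=
  match s with
  | [::] => 1
  | a :: s' => \sum_(m.+1 <= k < N.+1) (k%:R ^- a) * Hrec s' k N
  end.

(* Srec s m N = sum_{m <= k_1 <= ... <= k_l <= N} k_1^{-s_1} ... k_l^{-s_l} *)
Fixpoint Srec (s : seq nat) (m N : nat) : rat :=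
  match s with
  | [::] => 1
  | a :: s' => \sum_(m <= k < N.+1) (k%:R ^- a) * Srec s' k N
  end.

Definition H (s : seq nat) (N : nat) : rat := Hrec s 0 N.
Definition S (s : seq nat) (N : nat) : rat := Srec s 1 N.

Definition Pset (s : seq nat) : seq nat :=
  [seq sumn (take i s) | i <- iota 1 (size s).-1].

(* The composition of w whose set of partial sums is the (increasing) list D
   of elements of {1,...,w-1}: consecutive differences of 0, D, w. *)
Definition comp_of_set (w : nat) (D : seq nat) : seq nat :=
  pairmap (fun x y => (y - x)%N) 0%N (rcons D w).

(* s^* : P(s^* ) = {1,...,w-1} \ P(s) *)
Definition dual (s : seq nat) : seq nat :=
  comp_of_set (weight s) [seq i <- iota 1 (weight s).-1 | i \notin Pset s].

(* All ways of splitting s into nonempty blocks of consecutive parts. *)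
Fixpoint groupings (s : seq nat) : seq (seq (seq nat)) :=
  match s with
  | [::] => [:: [::]]
  | a :: s' =>
      flatten [seq match g with
                   | [::] => [:: [:: [:: a]]]
                   | b :: g' => [:: [:: a] :: b :: g'; (a :: b) :: g']
                   end | g <- groupings s']
  end.

(* The list of all t with t ⪯ s (obtained by adding groups of consecutive
   parts of s, including t = s). *)
Definition coarsenings (s : seq nat) : seq (seq nat) :=
  [seq map sumn g | g <- groupings s].

(* Congruence of rationals modulo m (p-integral sense): m divides the
   numerator of x - y and the denominator of x - y is coprime to p. *)
Definition rat_congr (p m : nat) (x y : rat) : bool :=
  ((m%:Z %| numq (x - y))%Z && coprime `|denq (x - y)|%N p).

(* Main.v *)
Require Import Defs.
From mathcomp Require Import all_boot all_order all_algebra.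
From mathcomp Require Import zify ring lra.
Set Implicit Arguments. Unset Strict Implicit. Unset Printing Implicit Defensive.
Import Order.TTheory GRing.Theory Num.Theory.
Local Open Scope ring_scope.

Section PInt.
Variable p : nat.
Definition pint (x : rat) : bool := coprime `|denq x|%N p.

Lemma pint_frac (a b : int) : b != 0 -> coprime `|b|%N p -> pint (a%:~R / b%:~R).
Proof.
move=> b0 cb; rewrite /pint; move: b0 cb; case: divqP => [|k x k0]; first by rewrite eqxx.
by move=> _; rewrite abszM coprimeMl => /andP[].
Qed.

Lemma pint_int (a : int) : pint a%:~R.
Proof. by rewrite /pint denq_int coprime1n. Qed.

Lemma pint_nat (n : nat) : pint n%:R.
Proof. by rewrite -[n%:R]/(n%:Z%:~R) pint_int. Qed.

Lemma pint_num_den x : x = (numq x)%:~R / (denq x)%:~R.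
Proof. by rewrite divq_num_den. Qed.

Lemma pintD x y : pint x -> pint y -> pint (x + y).
Proof.
move=> hx hy; rewrite (pint_num_den x) (pint_num_den y).
rewrite addf_div ?intr_eq0 ?denq_neq0 // -!intrM -intrD.
by apply: pint_frac; rewrite ?mulf_neq0 ?denq_neq0 // abszM coprimeMl; apply/andP.
Qed.

Lemma pintM x y : pint x -> pint y -> pint (x * y).
Proof.
move=> hx hy; rewrite (pint_num_den x) (pint_num_den y).
rewrite mulf_div -!intrM.
by apply: pint_frac; rewrite ?mulf_neq0 ?denq_neq0 // abszM coprimeMl; apply/andP.
Qed.

Lemma pintN x : pint x -> pint (- x).
Proof. by rewrite /pint denqN. Qed.

Lemma pintB x y : pint x -> pint y -> pint (x - y).
Proof. by move=> hx hy; apply: pintD => //; apply: pintN. Qed.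

Lemma pintX x n : pint x -> pint (x ^+ n).
Proof. by move=> hx; elim: n => [|n IH]; rewrite ?expr0 ?(pint_nat 1) // exprS pintM. Qed.

Lemma pint_inv (k : nat) : coprime k p -> pint (k%:R^-1).
Proof.
move=> ck; have [->|k0] := eqVneq k 0%N; first by rewrite invr0 (pint_nat 0).
rewrite -[k%:R]/(k%:Z%:~R) -div1r -[1]/(1%:~R).
by apply: pint_frac => //; rewrite eqz_nat.
Qed.

Lemma pint_invX (k a : nat) : coprime k p -> pint (k%:R ^- a).
Proof. by move=> ck; rewrite -exprVn; apply/pintX/pint_inv. Qed.

Lemma pint_sum I (r : seq I) (P : pred I) (F : I -> rat) :
  (forall i, P i -> pint (F i)) -> pint (\sum_(i <- r | P i) F i).
Proof.
move=> h; elim/big_rec: _ => [|i x Pi hx]; first exact: (pint_nat 0).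
by apply: pintD => //; apply: h.
Qed.

Lemma congr_of (x y z : rat) : prime p -> pint z -> x - y = (p ^ 2)%:R * z ->
  rat_congr p (p ^ 2) x y.
Proof.
rewrite /rat_congr => pp hz ->.
have cz := coprime_num_den z.
have cp : coprime (absz ((p ^ 2)%:Z * numq z)) (absz (denq z)).
  by rewrite abszM coprimeMl cz andbT /= coprimeXl // coprime_sym.
rewrite (pint_num_den z) mulrA -[(p^2)%:R]/((p^2)%:Z%:~R) -intrM.
rewrite coprimeq_num // coprimeq_den // denq_eq0 /= gtr0_sg ?denq_gt0 // mul1r.
by rewrite dvdz_mulr ?dvdzz.
Qed.

End PInt.

Lemma exch_le (F : nat -> nat -> rat) m n :
  \sum_(m <= j < n) \sum_(j <= i < n) F i j =
  \sum_(m <= i < n) \sum_(m <= j < i.+1) F i j.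
Proof.
elim: n => [|n IH]; first by rewrite !big_geq.
have [lt|le] := ltnP n m.
  by rewrite !big_geq.
rewrite big_nat_recr //= [RHS]big_nat_recr //= -IH.
rewrite big_nat1 [X in _ = _ + X]big_nat_recr //= addrA; congr (_ + _).
rewrite -big_split /=; apply: eq_big_nat => j /andP[hj1 hj2].
by rewrite big_nat_recr //= ltnW.
Qed.

Lemma exch_lt (F : nat -> nat -> rat) m n :
  \sum_(m <= k < n) \sum_(k.+1 <= j < n) F k j =
  \sum_(m <= j < n) \sum_(m <= k < j) F k j.
Proof.
elim: n => [|n IH]; first by rewrite !big_geq.
have [lt|le] := ltnP n m.
  by rewrite !big_geq.
rewrite big_nat_recr //= [RHS]big_nat_recr //= -IH.
rewrite [X in _ + X]big_geq // addr0.
rewrite -big_split /=; apply: eq_big_nat => j /andP[hj1 hj2].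
by rewrite big_nat_recr.
Qed.

Lemma Srec_rcons s b m n :
  Srec (rcons s b) m n = \sum_(m <= k < n.+1) (k%:R ^- b) * Srec s m k.
Proof.
elim: s m => [|a s IH] m /=.
  by apply: eq_bigr => k _; rewrite mulr1.
under eq_bigr => j _ do rewrite IH big_distrr /=.
rewrite exch_le; apply: eq_big_nat => k _; rewrite big_distrr /=.
by apply: eq_bigr => j _; rewrite !mulrA [_ * k%:R ^- b]mulrC.
Qed.

Lemma Hrec_rcons1 t m N :
  Hrec (rcons t 1%N) m N = \sum_(m.+1 <= j < N.+1) j%:R^-1 * Hrec t m j.-1.
Proof.
elim: t m => [|a t IH] m /=.
  by apply: eq_bigr => k _; rewrite mulr1 expr1.
under eq_bigr => j _ do rewrite IH big_distrr /=.
rewrite exch_lt; apply: eq_big_nat => j /andP[hj _]; rewrite big_distrr /=.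
rewrite prednK; last by apply: leq_ltn_trans hj.
by apply: eq_bigr => k _; rewrite !mulrA [_ * j%:R^-1]mulrC.
Qed.

Definition addh (c : nat) (s : seq nat) : seq nat :=
  if s is a :: r then (c + a)%N :: r else [::].

Definition cstep (a : nat) (t : seq nat) : seq (seq nat) :=
  if t is b :: t' then [:: a :: b :: t'; (a + b)%N :: t'] else [:: [:: a]].

Lemma coars_cons a s :
  coarsenings (a :: s) = flatten [seq cstep a t | t <- coarsenings s].
Proof.
rewrite /coarsenings /= map_flatten -map_comp; congr flatten.
rewrite -map_comp; apply: eq_map => -[|b g] /=; first by rewrite addn0.
by rewrite addn0.
Qed.

Lemma coars_nonnil a s t : t \in coarsenings (a :: s) -> t != [::].
Proof.
rewrite coars_cons => /flattenP[u /mapP[t' _ ->]].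
by case: t' => [|b t'] /=; rewrite !inE; [move=> /eqP-> | case/orP=> /eqP->].
Qed.

Lemma addh0 t : addh 0 t = t.
Proof. by case: t. Qed.

Lemma S_coars s : forall c m N,
  Srec (addh c s) m.+1 N = \sum_(t <- coarsenings s) Hrec (addh c t) m N.
Proof.
elim: s => [|a s IH] c m N.
  by rewrite /coarsenings /= big_cons big_nil addr0.
case: s IH => [|b s] IH.
  by rewrite /coarsenings /= big_seq1 addn0.
rewrite coars_cons big_flatten /= big_map.
have E : \sum_(j <- coarsenings (b :: s)) \sum_(i <- cstep a j) Hrec (addh c i) m N =
   \sum_(j <- coarsenings (b :: s)) (Hrec ((c + a)%N :: j) m N + Hrec (addh (c + a) j) m N).
  rewrite big_seq_cond [RHS]big_seq_cond; apply: eq_bigr => t /andP[ht _].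
  case: t ht => [|b' t'] ht; first by have := coars_nonnil ht.
  by rewrite !big_cons big_nil addr0 /addh addnA.
rewrite E big_split /= -IH /=.
have -> : \sum_(m.+1 <= k < N.+1)
     k%:R ^- (c + a) * \sum_(k <= k0 < N.+1) k0%:R ^- b * Srec s k0 N =
   \sum_(m.+1 <= k < N.+1) k%:R ^- (c + a) * Srec (b :: s) k.+1 N +
   \sum_(m.+1 <= k < N.+1) k%:R ^- (c + a + b) * Srec s k N.
  rewrite -big_split /=; apply: eq_big_nat => k /andP[_ hk].
  rewrite big_ltn // mulrDr addrC; congr (_ + _).
  by rewrite mulrA -invfM -exprD.
congr (_ + _).
have IH0 : forall k, Srec (b :: s) k.+1 N = \sum_(t <- coarsenings (b :: s)) Hrec t k N.
  by move=> k; have := IH 0%N k N; rewrite /= add0n => ->; apply: eq_bigr => t _; rewrite addh0.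
transitivity (\sum_(m.+1 <= k < N.+1) \sum_(t <- coarsenings (b :: s)) k%:R ^- (c + a) * Hrec t k N).
  by apply: eq_bigr => k _; rewrite IH0 big_distrr.
by rewrite exchange_big.
Qed.

Lemma sum_coarsH s N :
  \sum_(t <- coarsenings s) H (rcons t 1%N) N =
  \sum_(1 <= j < N.+1) j%:R^-1 * S s j.-1.
Proof.
rewrite /H /S.
under eq_bigr => t _ do rewrite Hrec_rcons1.
rewrite exchange_big /=; apply: eq_bigr => j _.
rewrite -big_distrr /=; congr (_ * _).
have := S_coars s 0 0 j.-1; rewrite addh0 => ->; by apply: eq_bigr => t _; rewrite addh0.
Qed.
Local Close Scope ring_scope.

Lemma Pset_rcons_any (s : seq nat) b :
  Pset (rcons s b) = [seq sumn (take i s) | i <- iota 1 (size s)].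
Proof.
rewrite /Pset size_rcons /=; apply/eq_in_map => i; rewrite mem_iota => /andP[_ hi].
by rewrite -cats1 takel_cat // -ltnS -add1n.
Qed.

Lemma sumn_take_le (s : seq nat) i : sumn (take i s) <= sumn s.
Proof. by rewrite -{2}(cat_take_drop i s) sumn_cat leq_addr. Qed.

Lemma Pset_le (s : seq nat) b x : x \in Pset (rcons s b) -> x <= sumn s.
Proof. by rewrite Pset_rcons_any => /mapP[i _ ->]; apply: sumn_take_le. Qed.

Lemma Pset_rcons (s : seq nat) b : s != [::] ->
  Pset (rcons s b) = rcons (Pset s) (sumn s).
Proof.
move=> s0; rewrite Pset_rcons_any /Pset.
have hs : size s = ((size s).-1 + 1)%N by rewrite addn1 prednK // lt0n size_eq0.
rewrite {1}hs iotaD cats1 map_rcons; congr rcons.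
by rewrite add1n -addn1 -hs take_size.
Qed.

Lemma comp_of_set_rcons w D :
  comp_of_set w D = rcons (pairmap (fun x y => (y - x)%N) 0%N D) (w - last 0%N D).
Proof. by rewrite /comp_of_set -cats1 pairmap_cat cats1. Qed.

Lemma dual_nonnil s : dual s != [::].
Proof. by rewrite /dual comp_of_set_rcons; case: pairmap. Qed.

Lemma sumn_rcons (s : seq nat) b : sumn (rcons s b) = (sumn s + b)%N.
Proof. by rewrite -cats1 sumn_cat /= addn0. Qed.

Lemma iota_rcons n : 0 < n -> iota 1 n = rcons (iota 1 n.-1) n.
Proof.
move=> n0; rewrite -{1}(prednK n0) -[n.-1.+1]addn1 iotaD cats1 /=; congr rcons.
by rewrite add1n prednK.
Qed.

Lemma dual_rcons_S s b : 0 < b ->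
  dual (rcons s b.+1) = rcons (dual (rcons s b)) 1.
Proof.
move=> b0; rewrite /dual /weight !sumn_rcons addnS /=.
set W := (sumn s + b)%N.
have W0 : 0 < W by rewrite /W addn_gt0 b0 orbT.
rewrite (iota_rcons W0) filter_rcons.
have -> : (W \notin Pset (rcons s b.+1)) = true.
  apply/negP => /Pset_le; rewrite /W leqNgt => /negP; apply.
  by rewrite -{1}(addn0 (sumn s)) ltn_add2l.
rewrite (Pset_rcons_any s b.+1) -(Pset_rcons_any s b).
rewrite comp_of_set_rcons last_rcons subSnn; congr rcons.
Qed.

Lemma dual_rcons1 s : s != [::] -> composition s ->
  exists u d, dual s = rcons u d /\ dual (rcons s 1%N) = rcons u d.+1.
Proof.
move=> s0 cs; rewrite /dual /weight sumn_rcons addn1 /=.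
set w := sumn s.
have w0 : 0 < w.
  case: s s0 cs @w => [|a s] //= _ /andP[a0 _].
  by rewrite addn_gt0 a0.
rewrite (iota_rcons w0) filter_rcons Pset_rcons //.
rewrite mem_rcons mem_head /=.
set D := [seq i <- iota 1 w.-1 | i \notin Pset s].
have -> : [seq i <- iota 1 w.-1 | i \notin rcons (Pset s) w] = D.
  apply: eq_in_filter => i; rewrite mem_iota => /andP[_ hi].
  rewrite mem_rcons in_cons; case: eqP => // ei.
  by move: hi; rewrite ei add1n prednK // ltnn.
rewrite !comp_of_set_rcons; do 2 eexists; split; first by [].
congr rcons; rewrite subSn //.
have : last 0%N D \in 0%N :: D by apply: mem_last.
rewrite in_cons => /predU1P[->|]; first by [].
rewrite mem_filter mem_iota => /andP[_ /andP[_ h]].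
by apply: ltnW; move: h; rewrite add1n prednK.
Qed.

Lemma dual1 : dual [:: 1%N] = [:: 1%N].
Proof. by []. Qed.
Local Open Scope ring_scope.

Lemma hockey k n : (\sum_(k.+1 <= j < n.+1) 'C(j.-1, k) = 'C(n, k.+1))%N.
Proof.
elim: n => [|n IH]; first by rewrite big_geq.
have [le|lt] := leqP k.+1 n.+1.
  by rewrite big_nat_recr //= IH binS addnC.
by rewrite big_geq ?bin_small // ltnW.
Qed.

Lemma bin_k n k : (0 < k)%N -> (0 < n)%N ->
  'C(n.-1, k.-1)%:R / k%:R = 'C(n, k)%:R / n%:R :> rat.
Proof.
move=> k0 n0; have := mul_bin_diag n k.-1; rewrite prednK // => h.
apply/eqP; rewrite eqr_div ?pnatr_eq0 -?lt0n // -!natrM.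
by rewrite mulnC h mulnC.
Qed.

Lemma PAS n i : (0 < i)%N -> (0 < n)%N -> (i <= n.+1)%N ->
  \sum_(i <= k < n.+1) (-1) ^+ k.-1 * 'C(n, k)%:R =
  (-1) ^+ i.-1 * 'C(n.-1, i.-1)%:R :> rat.
Proof.
move=> i0; case: n => // n _ le.
pose g k : rat := (-1) ^+ k.-1 * 'C(n, k.-1)%:R.
have E : forall k, (0 < k)%N -> (-1) ^+ k.-1 * 'C(n.+1, k)%:R = - (g k.+1 - g k).
  move=> k k0; rewrite /g /=; case: k k0 => // k' _ /=.
  rewrite binS natrD exprS; ring.
rewrite (eq_big_nat _ _ (fun k hk => E k _)); last first.
  by move=> k /andP[h _]; apply: leq_trans h.
rewrite sumrN telescope_sumr // /g /= bin_small ?prednK //; ring.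
Qed.

Definition Phi (f : nat -> rat) n : rat :=
  \sum_(1 <= k < n.+1) (-1) ^+ k.-1 * 'C(n.-1, k.-1)%:R * f k.

Lemma Phi_ext f g n : (forall k, (0 < k)%N -> (k <= n)%N -> f k = g k) -> Phi f n = Phi g n.
Proof.
move=> h; apply: eq_big_nat => k /andP[k1 k2]; rewrite h //.
Qed.

Lemma K_id f n : (0 < n)%N ->
  Phi (fun k => k%:R^-1 * \sum_(1 <= i < k.+1) f i) n = n%:R^-1 * Phi f n.
Proof.
move=> n0; rewrite /Phi.
under eq_bigr => k _ do rewrite mulrA big_distrr /=.
rewrite -exch_le big_distrr /=; apply: eq_big_nat => i /andP[i1 i2].
rewrite -big_distrl -(PAS i1 n0 (ltnW i2)) /= mulrA big_distrr /=; congr (_ * _).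
apply: eq_big_nat => k /andP[k1 k2].
have k0 : (0 < k)%N by apply: leq_trans k1.
rewrite -mulrA bin_k //; ring.
Qed.

Lemma K'_id f n : (0 < n)%N ->
  Phi (fun k => k%:R^-1 * f k) n = n%:R^-1 * \sum_(1 <= j < n.+1) Phi f j.
Proof.
move=> n0; rewrite /Phi -exch_le big_distrr /=; apply: eq_big_nat => k /andP[k1 k2].
have -> : \sum_(k <= i < n.+1) (-1) ^+ k.-1 * 'C(i.-1, k.-1)%:R * f k =
   (-1) ^+ k.-1 * 'C(n, k)%:R * f k.
  rewrite -big_distrl -big_distrr /= -natr_sum.
  by have hk := hockey k.-1 n; rewrite prednK // in hk; rewrite hk.
have kk : k%:R != 0 :> rat by rewrite pnatr_eq0 -lt0n.
have nn : n%:R != 0 :> rat by rewrite pnatr_eq0 -lt0n.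
have -> : ('C(n.-1, k.-1)%:R : rat) = 'C(n, k)%:R / n%:R * k%:R by rewrite -bin_k // divfK.
by rewrite !mulrA (mulfK kk); ring.
Qed.

Lemma S_rcons u c n : S (rcons u c) n = \sum_(1 <= k < n.+1) k%:R ^- c * S u k.
Proof. by rewrite /S Srec_rcons. Qed.

Definition L s k : rat := S s k - S s k.-1.

Lemma L_rcons u c k : (0 < k)%N -> L (rcons u c) k = k%:R ^- c * S u k.
Proof.
move=> k0; rewrite /L !S_rcons big_nat_recr //= prednK //; ring.
Qed.

Lemma S0 u : u != [::] -> S u 0 = 0.
Proof. by case: u => // a u _; rewrite /S /= big_geq. Qed.

Lemma S_tele u n : u != [::] -> S u n = \sum_(1 <= j < n.+1) L u j.
Proof.
move=> u0; rewrite big_add1 /= /L.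
under eq_bigr => j _ do rewrite /=.
by rewrite telescope_sumr // S0 // subr0.
Qed.

Lemma Phi_delta n : (0 < n)%N -> Phi (fun i => (i == 1%N)%:R) n = 1.
Proof.
move=> n0; rewrite /Phi big_ltn // big_nat_cond big1 ?addr0 /=; first by rewrite bin0 expr0 !mul1r.
by move=> k /andP[/andP[k2 _] _]; rewrite (_ : (k == 1%N) = false) ?mulr0 //; apply/negbTE; rewrite neq_ltn k2 orbT.
Qed.

Lemma dual_L_aux w : forall s, (weight s <= w)%N -> composition s -> s != [::] ->
  forall n, (0 < n)%N -> L (dual s) n = Phi (L s) n.
Proof.
elim: w => [|w IH] s.
  by case: s => //= a s; rewrite leqn0 addn_eq0 => /andP[/eqP-> _] /andP[].
case/lastP: s => [//|s' c]; rewrite /composition all_rcons /weight sumn_rcons.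
move=> hw /andP[c0 cs'] _ n n0.
case: c c0 hw => // -[|b] _ hw.
-
  have [->|s0] := eqVneq s' [::].
    rewrite dual1 /= (_ : [:: 1%N] = rcons [::] 1%N) // L_rcons //.
    rewrite (Phi_ext (g := fun k => k%:R^-1 * \sum_(1 <= i < k.+1) (i == 1%N)%:R)); last first.
      move=> k k0 _; rewrite L_rcons // big_ltn // big_nat_cond big1 ?addr0 ?expr1 /S //.
      by move=> i /andP[/andP[i2 _] _]; rewrite (_ : (i == 1%N) = false) //; apply/negbTE; rewrite neq_ltn i2 orbT.
    by rewrite K_id // Phi_delta // mulr1 /S /= expr1 mulr1.
  have [u [d [e1 e2]]] := dual_rcons1 s0 cs'.
  have hw' : (weight s' <= w)%N by rewrite /weight -ltnS -(addn1 (sumn s')).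
  rewrite e2 L_rcons // exprS invfM -mulrA -L_rcons // -e1 IH //.
  rewrite -K_id //; apply: Phi_ext => k k0 _.
  by rewrite L_rcons // expr1 S_tele.
-
  have hw' : (weight (rcons s' b.+1) <= w)%N by rewrite /weight sumn_rcons -ltnS -addnS.
  have cv : composition (rcons s' b.+1) by rewrite /composition all_rcons cs'.
  rewrite dual_rcons_S // L_rcons // expr1 S_tele ?dual_nonnil //.
  have E : forall j, (0 < j < n.+1)%N -> L (dual (rcons s' b.+1)) j = Phi (L (rcons s' b.+1)) j.
    by move=> j /andP[j0 _]; apply: IH => //; case: (s').
  rewrite (eq_big_nat _ _ E); symmetry.
  transitivity (Phi (fun k => k%:R^-1 * L (rcons s' b.+1) k) n); last exact: K'_id.
  apply: Phi_ext => k k0 _.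
  by rewrite !L_rcons // exprS invfM mulrA.
Qed.

Lemma SD s n : composition s -> s != [::] ->
  S (dual s) n = \sum_(1 <= k < n.+1) (-1) ^+ k.-1 * 'C(n, k)%:R * L s k.
Proof.
move=> cs s0; rewrite S_tele ?dual_nonnil //.
rewrite (eq_big_nat _ _ (fun j hj => dual_L_aux (leqnn _) cs s0 (n := j) _)); last first.
  by move=> j /andP[].
rewrite /Phi -exch_le; apply: eq_big_nat => k /andP[k1 k2].
rewrite -big_distrl -big_distrr /= -natr_sum.
by have hk := hockey k.-1 n; rewrite prednK // in hk; rewrite hk.
Qed.

Definition Hk (k : nat) : rat := \sum_(1 <= j < k.+1) j%:R^-1.

Lemma cop_lt p j : prime p -> (0 < j)%N -> (j < p)%N -> coprime j p.
Proof.
move=> pp j0 jp; rewrite coprime_sym prime_coprime //; apply/negP => /dvdn_leq.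
by move=> /(_ j0); rewrite leqNgt jp.
Qed.

Lemma pint_sum_nat p m n (F : nat -> rat) :
  (forall i, (m <= i < n)%N -> pint p (F i)) -> pint p (\sum_(m <= i < n) F i).
Proof. by move=> h; rewrite big_nat_cond; apply: pint_sum => i /andP[hi _]; apply: h. Qed.

Lemma pint_Hk p k : prime p -> (k < p)%N -> pint p (Hk k).
Proof.
move=> pp kp; apply: pint_sum_nat => j /andP[j1 j2]; apply: pint_inv.
by apply: cop_lt => //; apply: leq_ltn_trans kp.
Qed.

Lemma pint_Srec p s m n : prime p -> (0 < m)%N -> (n < p)%N -> pint p (Srec s m n).
Proof.
move=> pp; elim: s m => [|a s IH] m m0 np /=; first exact: (pint_nat p 1).
apply: pint_sum_nat => k /andP[k1 k2]; apply: pintM; last by apply: IH => //; apply: leq_trans k1.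
apply: pint_invX; apply: cop_lt => //; first by apply: leq_trans k1.
by apply: leq_ltn_trans np.
Qed.

Lemma pint_L p s k : prime p -> (k < p)%N -> pint p (L s k).
Proof.
move=> pp kp; rewrite /L; apply: pintB; apply: pint_Srec => //.
by apply: leq_ltn_trans kp; apply: leq_pred.
Qed.

Definition binR p k : rat :=
  ((-1) ^+ k * 'C(p.-1, k)%:R - 1 + p%:R * Hk k) / (p ^ 2)%:R.

Lemma binR_eq p k : (0 < p)%N ->
  (-1) ^+ k * 'C(p.-1, k)%:R = 1 - p%:R * Hk k + (p ^ 2)%:R * binR p k.
Proof.
move=> p0; have p2 : (p ^ 2)%:R != 0 :> rat by rewrite pnatr_eq0 expn_eq0 negb_and -lt0n p0.
rewrite /binR [(p ^ 2)%:R * _]mulrC divfK //; ring.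
Qed.

Lemma binR_eq' p k : (0 < p)%N ->
  (p ^ 2)%:R * binR p k = (-1) ^+ k * 'C(p.-1, k)%:R - 1 + p%:R * Hk k.
Proof.
move=> p0; have p2 : (p ^ 2)%:R != 0 :> rat by rewrite pnatr_eq0 expn_eq0 negb_and -lt0n p0.
by rewrite /binR mulrC divfK.
Qed.

Lemma pint_binR p k : prime p -> (k < p)%N -> pint p (binR p k).
Proof.
move=> pp; have p0 := prime_gt0 pp.
have p2 : (p ^ 2)%:R != 0 :> rat by rewrite pnatr_eq0 expn_eq0 negb_and -lt0n p0.
elim: k => [|k IH] kp.
  have -> : binR p 0 = 0 by rewrite /binR expr0 bin0 /Hk big_geq //; ring.
  exact: (pint_nat p 0).
have IH' := IH (ltnW kp).
set x : rat := k.+1%:R^-1.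
have kx : k.+1%:R * x = 1 by rewrite /x mulfV // pnatr_eq0.
have hC : 'C(p.-1, k.+1)%:R = (p%:R - k.+1%:R) * x * 'C(p.-1, k)%:R :> rat.
  have hb := mul_bin_left p.-1 k.
  have e : (p.-1 - k = p - k.+1)%N by lia.
  rewrite e in hb.
  apply: (mulfI (_ : k.+1%:R != 0)); first by rewrite pnatr_eq0.
  rewrite -natrM hb natrM natrB ?(ltnW kp) //.
  by rewrite [RHS]mulrA; congr (_ * _); rewrite mulrCA kx mulr1.
have hH : Hk k.+1 = Hk k + x by rewrite /Hk big_nat_recr.
have -> : binR p k.+1 = binR p k + Hk k * x - p%:R * binR p k * x.
  apply: (mulfI p2).
  rewrite binR_eq' // exprS hC hH mulrBl kx.
  transitivity (- (p%:R * x - 1) * ((-1) ^+ k * 'C(p.-1, k)%:R) - 1 + p%:R * (Hk k + x)); first by ring.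
  rewrite binR_eq // natrX; ring.
apply: pintB; first apply: pintD => //.
  by apply: pintM; [apply: pint_Hk => //; apply: ltnW | apply: pint_inv; apply: cop_lt].
apply: pintM; last by apply: pint_inv; apply: cop_lt.
by apply: pintM => //; apply: pint_nat.
Qed.

Lemma harm p : prime p -> odd p ->
  exists h, pint p h /\ Hk p.-1 = p%:R * h.
Proof.
move=> pp op; have p0 := prime_gt0 pp.
exists (2%:R^-1 * \sum_(1 <= j < p) ((j * (p - j))%:R)^-1); split.
  apply: pintM; first by apply: pint_inv; rewrite coprime2n.
  apply: pint_sum_nat => j /andP[j1 j2]; apply: pint_inv.
  rewrite coprimeMl; apply/andP; split; apply: cop_lt => //; try lia.
rewrite /Hk prednK //.
set H := \sum_(1 <= j < p) _.
have E1 : H = \sum_(1 <= j < p) (p - j)%:R^-1.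
  rewrite /H big_nat_rev; apply: eq_big_nat => j _.
  by rewrite add1n subSS.
have E2 : 2%:R * H = p%:R * \sum_(1 <= j < p) ((j * (p - j))%:R)^-1.
  rewrite mulr2n mulrDl mul1r {2}E1 -big_split mulr_sumr /=.
  apply: eq_big_nat => j /andP[j1 j2].
  have hj : j%:R != 0 :> rat by rewrite pnatr_eq0 -lt0n.
  have hq : (p - j)%:R != 0 :> rat by rewrite pnatr_eq0 -lt0n subn_gt0.
  have hp : p%:R = j%:R + (p - j)%:R :> rat by rewrite -natrD subnKC // ltnW.
  rewrite natrM hp; move: hq; move: ((p - j)%:R) => q hq; field; by rewrite hj hq.
by rewrite mulrCA -E2 mulKf // pnatr_eq0.
Qed.

Theorem theorem2p11 (s : seq nat) (p : nat) :
  composition s -> s != [::] -> prime p -> odd p ->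
  rat_congr p (p ^ 2)
    (- S (dual s) p.-1)
    (S s p.-1 + p%:R * \sum_(t <- coarsenings s) H (rcons t 1%N) p.-1).
Proof.
move=> cs s0 pp op; have p0 := prime_gt0 pp.
have [h [ph Hh]] := harm pp op.
set N := p.-1.
have Np : (N < p)%N by rewrite /N prednK.
apply: (@congr_of p _ _ (\sum_(1 <= k < N.+1) (binR p k - h) * L s k) pp).
  apply: pint_sum_nat => k /andP[_ k2].
  have kp : (k < p)%N by apply: leq_trans k2 _; rewrite /N prednK.
  by apply: pintM; [apply: pintB => //; apply: pint_binR | apply: pint_L].
have HY : \sum_(1 <= j < N.+1) j%:R^-1 * S s j.-1 =
    \sum_(1 <= k < N.+1) (Hk N - Hk k) * L s k.
  transitivity (\sum_(1 <= j < N.+1) \sum_(1 <= k < j) j%:R^-1 * L s k).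
    apply: eq_big_nat => j /andP[j1 _].
    by rewrite (S_tele _ s0) prednK // big_distrr.
  rewrite -exch_lt; apply: eq_big_nat => k /andP[k1 k2].
  rewrite /Hk (@big_cat_nat _ _ _ k.+1 1 N.+1) //= addrC addrK big_distrl.
  by [].
have HX : \sum_(1 <= k < N.+1) (-1) ^+ k.-1 * 'C(N, k)%:R * L s k =
    \sum_(1 <= k < N.+1) - (1 - p%:R * Hk k + (p ^ 2)%:R * binR p k) * L s k.
  apply: eq_big_nat => k /andP[k1 k2]; rewrite -binR_eq //.
  by rewrite -(prednK k1) exprS /= mulN1r !mulNr opprK.
rewrite SD // sum_coarsH HY HX (S_tele _ s0) Hh.
rewrite opprD !mulr_sumr -!sumrN -!big_split /=; apply: eq_bigr => k _.
rewrite natrX; ring.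
Qed.
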